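(* Let $\Lambda=(\alpha,\lambda,f)$ be a Sieben twisted $S$-module structure on a semilattice of groups $A$ over an inverse semigroup $S$. Then the twisted $S$-module structure induced by the transversal $\rho(s)=\alpha(ss^{-1})\delta_s$ of the extension $A\overset{i}{\to}A*_\Lambda S\overset{j}{\to}S$ is $\Lambda$ itself.
   Context: A semilattice of groups is an inverse semigroup $A$ whose idempotents are central; $A_e=\{a: aa^{-1}=a^{-1}a=e\}$. An endomorphism $\varphi$ of $A$ is relatively invertible if there are $\bar\varphi\in\mathrm{End}\,A$, $e_\varphi\in E(A)$ with $\bar\varphi\varphi(a)=e_\varphi a$, $\varphi\bar\varphi(a)=\varphi(e_\varphi)a$, $e_\varphi$ the identity of $\bar\varphi(A)$, $\varphi(e_\varphi)$ the identity of $\varphi(A)$. A twisted $S$-module structure on $A$ is $(\alpha,\lambda,f)$ with $\alpha:E(S)\to E(A)$ an isomorphism, $s\mapsto\lambda_s$ relatively invertible endomorphisms, $f:S\times S\to A$ with $f(s,t)\in A_{\alpha(stt^{-1}s^{-1})}$, satisfying (i) $\lambda_e(a)=\alpha(e)a$ ($e\in E(S)$); (ii) $\lambda_s(\alpha(e))=\alpha(ses^{-1})$; (iii) $\lambda_s\lambda_t(a)=f(s,t)\lambda_{st}(a)f(s,t)^{-1}$; (iv) $f(se,e)=\alpha(ses^{-1})$, $f(e,es)=\alpha(ess^{-1})$; (v) $\lambda_s(f(t,u))f(s,tu)=f(s,t)f(st,u)$; Sieben means also $f(s,e)=\alpha(ses^{-1})$, $f(e,s)=\alpha(ess^{-1})$.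 The crossed product $A*_\Lambda S=\{a\delta_s: aa^{-1}=\alpha(ss^{-1})\}$ with $a\delta_s\cdot b\delta_t=a\lambda_s(b)f(s,t)\delta_{st}$ is an inverse semigroup, an extension of $A$ by $S$ via $i(a)=a\delta_{\alpha^{-1}(aa^{-1})}$ and $j(a\delta_s)=s$. For a transversal $\rho$ of $j$ ($j\circ\rho=\mathrm{id}$, $\rho(E(S))\subseteq E(A*_\Lambda S)$), the induced structure is $(\alpha_\rho,\lambda_\rho,f_\rho)$: $\alpha_\rho=i^{-1}\circ\rho|_{E(S)}$, $(\lambda_\rho)_s(a)=i^{-1}(\rho(s)i(a)\rho(s)^{-1})$, $f_\rho(s,t)$ the unique element of $A_{\alpha_\rho(stt^{-1}s^{-1})}$ with $\rho(s)\rho(t)=i(f_\rho(s,t))\rho(st)$. *)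

(* Defs.v *)
From Stdlib Require Import ClassicalEpsilon.

Set Implicit Arguments.

Section Semigroups.
Variable T : Type.
Variable mul : T -> T -> T.
Variable inv : T -> T.

Definition is_inverse (x y : T) : Prop :=
  mul (mul x y) x = x /\ mul (mul y x) y = y.

Definition inverse_semigroup : Prop :=
  (forall x y z, mul (mul x y) z = mul x (mul y z)) /\
  (forall x, is_inverse x (inv x)) /\
  (forall x y, is_inverse x y -> y = inv x).

Definition idem (e : T) : Prop := mul e e = e.

Definition semilattice_of_groups : Prop :=
  inverse_semigroup /\ (forall e a, idem e -> mul e a = mul a e).

Definition in_group (e a : T) : Prop := mul a (inv a) = e /\ mul (inv a) a = e.

Definition endomorphism (phi : T -> T) : Prop :=
  forall a b, phi (mul a b) = mul (phi a) (phi b).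

Definition identity_of_image (psi : T -> T) (e : T) : Prop :=
  (exists a, psi a = e) /\ (forall a, mul e (psi a) = psi a /\ mul (psi a) e = psi a).

Definition relatively_invertible (phi : T -> T) : Prop :=
  exists (phibar : T -> T) (ephi : T),
    endomorphism phibar /\ idem ephi /\
    (forall a, phibar (phi a) = mul ephi a) /\
    (forall a, phi (phibar a) = mul (phi ephi) a) /\
    identity_of_image phibar ephi /\
    identity_of_image phi (phi ephi).
End Semigroups.

Section Twisted.
Variables (A S : Type).
Variables (mulA : A -> A -> A) (invA : A -> A).
Variables (mulS : S -> S -> S) (invS : S -> S).
Variable alpha : S -> A.
Variable lam : S -> A -> A.
Variable f : S -> S -> A.

Local Notation "x * y" := (mulS x y).
Local Notation "a ** b" := (mulA a b) (at level 40, left associativity).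

Definition idem_iso : Prop :=
  (forall e, idem mulS e -> idem mulA (alpha e)) /\
  (forall e e', idem mulS e -> idem mulS e' -> alpha (e * e') = alpha e ** alpha e') /\
  (forall e e', idem mulS e -> idem mulS e' -> alpha e = alpha e' -> e = e') /\
  (forall g, idem mulA g -> exists e, idem mulS e /\ alpha e = g).

Definition twisted_module : Prop :=
  idem_iso /\
  (forall s, endomorphism mulA (lam s) /\ relatively_invertible mulA (lam s)) /\
  (forall s t, in_group mulA invA (alpha ((s * t) * (invS t * invS s))) (f s t)) /\
  (forall e a, idem mulS e -> lam e a = alpha e ** a) /\
  (forall s e, idem mulS e -> lam s (alpha e) = alpha ((s * e) * invS s)) /\
  (forall s t a, lam s (lam t a) = (f s t ** lam (s * t) a) ** invA (f s t)) /\
  (forall s e, idem mulS e ->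
     f (s * e) e = alpha ((s * e) * invS s) /\ f e (e * s) = alpha ((e * s) * invS s)) /\
  (forall s t u, lam s (f t u) ** f s (t * u) = f s t ** f (s * t) u).

Definition sieben_twisted_module : Prop :=
  twisted_module /\
  (forall s e, idem mulS e ->
     f s e = alpha ((s * e) * invS s) /\ f e s = alpha ((e * s) * invS s)).

(* The crossed product A *_Lambda S: pairs (a, s) (standing for a delta_s)
   with a a^-1 = alpha(s s^-1). *)
Definition in_cp (x : A * S) : Prop :=
  fst x ** invA (fst x) = alpha (snd x * invS (snd x)).

Definition cp_mul (x y : A * S) : A * S :=
  ((fst x ** lam (snd x) (fst y)) ** f (snd x) (snd y), snd x * snd y).

Definition cp_inv (x : A * S) : A * S :=
  epsilon (inhabits x) (fun y => in_cp y /\ is_inverse cp_mul x y).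

(* alpha^-1 : E(A) -> E(S) (s0 is only used to witness that S is inhabited) *)
Definition alpha_inv (s0 : S) (g : A) : S :=
  epsilon (inhabits s0) (fun e => idem mulS e /\ alpha e = g).

Definition cp_i (s0 : S) (a : A) : A * S := (a, alpha_inv s0 (a ** invA a)).

Definition cp_j (x : A * S) : S := snd x.

Definition cp_i_inv (x : A * S) : A :=
  epsilon (inhabits (fst x)) (fun b => cp_i (snd x) b = x).

Definition rho (s : S) : A * S := (alpha (s * invS s), s).

Definition alpha_rho (e : S) : A := cp_i_inv (rho e).

Definition lam_rho (s : S) (a : A) : A :=
  cp_i_inv (cp_mul (cp_mul (rho s) (cp_i s a)) (cp_inv (rho s))).

Definition f_rho (s t : S) : A :=
  epsilon (inhabits (fst (rho s)))
    (fun c => in_group mulA invA (alpha_rho ((s * t) * (invS t * invS s))) c /\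
              cp_mul (rho s) (rho t) = cp_mul (cp_i s c) (rho (s * t))).
End Twisted.

(* Main.v *)
Require Import Defs.
From Stdlib Require Import ClassicalEpsilon.
Set Implicit Arguments.

Section IS.
Variables (T : Type) (mul : T -> T -> T) (inv : T -> T).
Hypothesis HI : inverse_semigroup mul inv.
Local Notation "x * y" := (mul x y).

Lemma assoc x y z : x * y * z = x * (y * z).
Proof. apply HI. Qed.
Lemma Ix x : x * (inv x * x) = x.
Proof. rewrite <- assoc. apply (proj1 (proj1 (proj2 HI) x)). Qed.
Lemma Iy x : inv x * (x * inv x) = inv x.
Proof. rewrite <- assoc. apply (proj2 (proj1 (proj2 HI) x)). Qed.
Lemma Ixt x y : x * (inv x * (x * y)) = x * y.
Proof. rewrite <- (assoc (inv x)), <- assoc, Ix. reflexivity. Qed.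
Lemma Iyt x y : inv x * (x * (inv x * y)) = inv x * y.
Proof. rewrite <- (assoc x), <- assoc, Iy. reflexivity. Qed.
Lemma uniq x y : x * (y * x) = x -> y * (x * y) = y -> y = inv x.
Proof. intros H1 H2. apply (proj2 (proj2 HI)). split; rewrite assoc; auto. Qed.
Lemma inv_inv x : inv (inv x) = x.
Proof. symmetry. apply uniq. apply Iy. apply Ix. Qed.
Lemma idem_inv e : idem mul e -> inv e = e.
Proof. unfold idem; intro H. symmetry. apply uniq; rewrite H; exact H. Qed.
Lemma idt e y : idem mul e -> e * (e * y) = e * y.
Proof. intro H. rewrite <- assoc, H. reflexivity. Qed.
Lemma idem_xxi x : idem mul (x * inv x).
Proof. unfold idem. rewrite assoc, Ixt. reflexivity. Qed.
Lemma idem_xix x : idem mul (inv x * x).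
Proof. unfold idem. rewrite assoc, Iyt. reflexivity. Qed.

Lemma idem_mul e g : idem mul e -> idem mul g -> idem mul (e * g).
Proof.
  intros He Hg.
  set (x := inv (e * g)).
  assert (Hx : g * (x * e) = x).
  { apply uniq.
    - rewrite !assoc. rewrite (idt _ Hg), (idt _ He).
      rewrite <- (assoc e g (x * (e * g))). unfold x. apply Ix.
    - rewrite !assoc. rewrite (idt _ He), (idt _ Hg).
      rewrite <- (assoc e g (x * e)). unfold x. rewrite Iyt. reflexivity. }
  assert (Hxx : idem mul x).
  { unfold idem. rewrite <- Hx. rewrite !assoc.
    rewrite <- (assoc e g (x * e)). unfold x. rewrite Iyt. reflexivity. }
  assert (E : e * g = x).
  { rewrite <- (inv_inv (e * g)). fold x. apply idem_inv. exact Hxx. }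
  rewrite E. exact Hxx.
Qed.

Lemma idem_comm e g : idem mul e -> idem mul g -> e * g = g * e.
Proof.
  intros He Hg.
  assert (H1 : idem mul (e * g)) by (apply idem_mul; auto).
  assert (H2 : idem mul (g * e)) by (apply idem_mul; auto).
  assert (E : g * e = inv (e * g)).
  { apply uniq.
    - rewrite !assoc, (idt _ Hg), (idt _ He).
      pose proof H1 as H1'. unfold idem in H1'. rewrite !assoc in H1'. exact H1'.
    - rewrite !assoc, (idt _ He), (idt _ Hg). pose proof H2 as H2'. unfold idem in H2'.
      rewrite !assoc in H2'. exact H2'. }
  rewrite E, idem_inv; auto.
Qed.

Lemma inv_mul x y : inv (x * y) = inv y * inv x.
Proof.
  symmetry. apply uniq.
  - rewrite !assoc. transitivity (x*(((y*inv y)*(inv x*x))*y)).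
    { rewrite !assoc; reflexivity. }
    rewrite (idem_comm (idem_xxi y) (idem_xix x)). rewrite !assoc, Ixt, Ix. reflexivity.
  - rewrite !assoc. transitivity (inv y*(((inv x*x)*(y*inv y))*inv x)).
    { rewrite !assoc; reflexivity. }
    rewrite <- (idem_comm (idem_xxi y) (idem_xix x)). rewrite !assoc, Iyt, Iy. reflexivity.
Qed.
End IS.
Section Main.
Variables (A S : Type) (mulA : A -> A -> A) (invA : A -> A) (mulS : S -> S -> S) (invS : S -> S)
  (alpha : S -> A) (lam : S -> A -> A) (f : S -> S -> A).
Hypothesis HA : semilattice_of_groups mulA invA.
Hypothesis HS : inverse_semigroup mulS invS.
Hypothesis HT : sieben_twisted_module mulA invA mulS invS alpha lam f.
Local Notation "x * y" := (mulS x y).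
Local Notation "a ** b" := (mulA a b) (at level 40, left associativity).
Let SA : inverse_semigroup mulA invA := proj1 HA.

Ltac dT := destruct HT as [[[I1 [I2 [I3 I4]]] [L [F [X1 [X2 [X3 [X4 X5]]]]]]] Sb].

Lemma cen e a : idem mulA e -> e ** a = a ** e.
Proof. exact (proj2 HA e a). Qed.
Lemma aI e : idem mulS e -> idem mulA (alpha e).
Proof. dT; auto. Qed.
Lemma aM e e' : idem mulS e -> idem mulS e' -> alpha (e * e') = alpha e ** alpha e'.
Proof. dT; auto. Qed.
Lemma aInj e e' : idem mulS e -> idem mulS e' -> alpha e = alpha e' -> e = e'.
Proof. dT; auto. Qed.
Lemma aSurj g : idem mulA g -> exists e, idem mulS e /\ alpha e = g.
Proof. dT; auto. Qed.
Lemma lhom s a b : lam s (a ** b) = lam s a ** lam s b.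
Proof. dT. apply (proj1 (L s)). Qed.
Lemma lInv s a : lam s (invA a) = invA (lam s a).
Proof. apply (uniq SA); rewrite <- !lhom. rewrite (Ix SA). reflexivity. rewrite (Iy SA). reflexivity. Qed.
Lemma fG s t : in_group mulA invA (alpha ((s*t)*(invS t * invS s))) (f s t).
Proof. dT; auto. Qed.
Lemma ax1 e a : idem mulS e -> lam e a = alpha e ** a.
Proof. dT; auto. Qed.
Lemma ax2 s e : idem mulS e -> lam s (alpha e) = alpha ((s*e)*invS s).
Proof. dT; auto. Qed.
Lemma ax3 s t a : lam s (lam t a) = (f s t ** lam (s * t) a) ** invA (f s t).
Proof. dT; auto. Qed.
Lemma ax5 s t u : lam s (f t u) ** f s (t * u) = f s t ** f (s * t) u.
Proof. dT; auto. Qed.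
Lemma sb1 s e : idem mulS e -> f s e = alpha ((s*e)*invS s).
Proof. dT. intro H; apply (Sb s e H). Qed.
Lemma sb2 s e : idem mulS e -> f e s = alpha ((e*s)*invS s).
Proof. dT. intro H; apply (Sb s e H). Qed.

Lemma gI g x : in_group mulA invA g x -> idem mulA g.
Proof. intros [H1 H2]. rewrite <- H1. apply (idem_xxi SA). Qed.
Lemma gl g x : in_group mulA invA g x -> g ** x = x.
Proof. intros [H1 H2]. rewrite <- H1, (assoc SA). apply (Ix SA). Qed.
Lemma gr g x : in_group mulA invA g x -> x ** g = x.
Proof. intros [H1 H2]. rewrite <- H2. apply (Ix SA). Qed.
Lemma gInv g x : in_group mulA invA g x -> in_group mulA invA g (invA x).
Proof. intros [H1 H2]. split; rewrite (inv_inv SA); auto. Qed.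

Lemma cpi_inv x : cp_i mulA invA mulS alpha (snd x) (fst x) = x ->
  cp_i_inv mulA invA mulS alpha x = fst x.
Proof.
  intro H. unfold cp_i_inv.
  pose proof (epsilon_spec (inhabits (fst x)) (fun b => cp_i mulA invA mulS alpha (snd x) b = x)
     (ex_intro _ _ H)) as E.
  apply (f_equal fst) in E. exact E.
Qed.

Lemma ainv_a s0 e : idem mulS e -> alpha_inv mulS alpha s0 (alpha e) = e.
Proof.
  intro He. unfold alpha_inv.
  destruct (epsilon_spec (inhabits s0) (fun e' => idem mulS e' /\ alpha e' = alpha e)
     (ex_intro _ e (conj He eq_refl))) as [H1 H2].
  apply aInj; auto.
Qed.

Lemma ainv_spec s0 g : idem mulA g ->
  idem mulS (alpha_inv mulS alpha s0 g) /\ alpha (alpha_inv mulS alpha s0 g) = g.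
Proof.
  intro Hg. unfold alpha_inv. apply epsilon_spec. apply aSurj; auto.
Qed.

Lemma part1 : (forall s, in_cp mulA invA mulS invS alpha (rho mulS invS alpha s)) /\
   (forall s, cp_j (rho mulS invS alpha s) = s) /\
   (forall e, idem mulS e -> idem (cp_mul mulA mulS lam f) (rho mulS invS alpha e)).
Proof.
  split; [|split].
  - intro s. unfold in_cp, rho; simpl.
    pose proof (aI (idem_xxi HS s)) as H.
    rewrite (idem_inv SA H). exact H.
  - reflexivity.
  - intros e He. unfold idem, cp_mul, rho; simpl.
    rewrite (sb1 e He), (ax1 _ He). rewrite (idem_inv HS He). rewrite !He.
    pose proof (aI He) as H. unfold idem in H. rewrite !H. reflexivity.
Qed.

Lemma part_alpha e : idem mulS e -> alpha_rho mulA invA mulS invS alpha e = alpha e.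
Proof.
  intro He. unfold alpha_rho. rewrite cpi_inv; simpl.
  - rewrite (idem_inv HS He), !He. reflexivity.
  - unfold cp_i, rho; simpl. rewrite (idem_inv HS He), !He.
    pose proof (aI He) as H. rewrite (idem_inv SA H). unfold idem in H. rewrite H.
    rewrite ainv_a; auto.
Qed.

Lemma part_f s t : f_rho mulA invA mulS invS alpha lam f s t = f s t.
Proof.
  set (g := (s*t)*(invS t * invS s)).
  assert (Hg : idem mulS g). { unfold g. rewrite <- (inv_mul HS). apply (idem_xxi HS). }
  assert (LHS : cp_mul mulA mulS lam f (rho mulS invS alpha s) (rho mulS invS alpha t) = (f s t, s*t)).
  { unfold cp_mul, rho; simpl. rewrite (ax2 s (idem_xxi HS t)).
    assert (E1 : (s*(t*invS t))*invS s = g) by (unfold g; rewrite !(assoc HS); reflexivity).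
    rewrite E1. rewrite <- (aM (idem_xxi HS s) Hg).
    assert (E2 : s * invS s * g = g) by (unfold g; rewrite !(assoc HS), (Ixt HS); reflexivity).
    rewrite E2. pose proof (gl (fG s t)) as G. fold g in G. rewrite G. reflexivity. }
  assert (RHS : forall c, in_group mulA invA (alpha g) c ->
     cp_mul mulA mulS lam f (cp_i mulA invA mulS alpha s c) (rho mulS invS alpha (s*t)) = (c, s*t)).
  { intros c Hc. unfold cp_mul, cp_i, rho; simpl. rewrite (proj1 Hc). rewrite (ainv_a s Hg).
    rewrite (ax1 _ Hg), (sb2 _ Hg). rewrite (inv_mul HS). fold g.
    assert (E3 : g * (s*t) * (invS t * invS s) = g).
    { transitivity (g*g). unfold g; rewrite !(assoc HS); reflexivity. exact Hg. }
    assert (E4 : g * (s*t) = s*t).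
    { transitivity ((s*t)*(invS (s*t)*(s*t))). rewrite (inv_mul HS). unfold g; rewrite !(assoc HS); reflexivity.
      apply (Ix HS). }
    rewrite E3, E4. pose proof (aI Hg) as H. unfold idem in H. rewrite H.
    rewrite !(gr Hc). reflexivity. }
  unfold f_rho.
  match goal with |- epsilon ?i ?P = _ => 
    assert (HP : P (f s t)); [| pose proof (epsilon_spec i P (ex_intro _ _ HP)) as Hs;
      set (c := epsilon i P) in * ] end.
  - simpl. fold g. rewrite (part_alpha Hg). split. apply fG. rewrite LHS, (RHS _ (fG s t)). reflexivity.
  - simpl in Hs. fold g in Hs. destruct Hs as [Hc Heq]. rewrite (part_alpha Hg) in Hc.
    rewrite LHS, (RHS _ Hc) in Heq. injection Heq. auto.
Qed.

Lemma cen_t x y z : idem mulA x -> x ** (y ** z) = y ** (x ** z).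
Proof. intro H. rewrite <- !(assoc SA), (cen y H). reflexivity. Qed.

Lemma inv_exists s : exists y, in_cp mulA invA mulS invS alpha y /\
   is_inverse (cp_mul mulA mulS lam f) (rho mulS invS alpha s) y.
Proof.
  set (f' := f (invS s) s). set (F := f s (invS s)).
  set (e1 := s * invS s). set (e2 := invS s * s).
  assert (He1 : idem mulS e1) by apply (idem_xxi HS).
  assert (He2 : idem mulS e2) by apply (idem_xix HS).
  assert (Hf' : in_group mulA invA (alpha e2) f').
  { pose proof (fG (invS s) s) as H. rewrite (inv_inv HS) in H. fold e2 in H. rewrite He2 in H. exact H. }
  assert (HF : in_group mulA invA (alpha e1) F).
  { pose proof (fG s (invS s)) as H. rewrite (inv_inv HS) in H. fold e1 in H. rewrite He1 in H. exact H. }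
  assert (Ee1s : e1 * s = s) by (unfold e1; rewrite (assoc HS); apply (Ix HS)).
  assert (Ee2is : e2 * invS s = invS s) by (unfold e2; rewrite (assoc HS); apply (Iy HS)).
  assert (lamf : lam s f' = F).
  { pose proof (ax5 s (invS s) s) as H. fold f' F in H. fold e2 e1 in H.
    rewrite (sb1 s He2), (sb2 s He1) in H.
    assert (E : s * e2 * invS s = e1) by (unfold e2, e1; rewrite !(assoc HS), (Ixt HS); reflexivity).
    rewrite E, Ee1s in H. fold e1 in H. rewrite (gr HF) in H.
    assert (G : in_group mulA invA (alpha e1) (lam s f')).
    { split; rewrite <- lInv, <- lhom; [rewrite (proj1 Hf') | rewrite (proj2 Hf')];
      rewrite (ax2 s He2), E; reflexivity. }
    rewrite (gr G) in H. exact H. }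
  exists (invA f', invS s). split; [|split].
  - unfold in_cp; simpl. rewrite (inv_inv SA), (inv_inv HS). exact (proj2 Hf').
  - assert (P1 : cp_mul mulA mulS lam f (rho mulS invS alpha s) (invA f', invS s) = (alpha e1, e1)).
    { unfold cp_mul, rho; simpl. rewrite lInv, lamf. fold e1. fold F. rewrite (assoc SA), (proj2 HF).
      rewrite (aI He1). reflexivity. }
    rewrite P1. unfold cp_mul, rho; simpl. rewrite (ax1 _ He1), (sb2 _ He1), Ee1s. fold e1.
    rewrite !(aI He1). reflexivity.
  - assert (P2 : cp_mul mulA mulS lam f (invA f', invS s) (rho mulS invS alpha s) = (alpha e2, e2)).
    { unfold cp_mul, rho; simpl. fold e1 e2. rewrite (ax2 _ He1), (inv_inv HS).
      assert (E : invS s * e1 * s = e2) by (unfold e1, e2; rewrite !(assoc HS), (Iyt HS); reflexivity).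
      rewrite E. fold f'. rewrite (gr (gInv Hf')), (proj2 Hf'). reflexivity. }
    rewrite P2. unfold cp_mul; simpl. rewrite (ax1 _ He2), (sb2 _ He2), Ee2is, (inv_inv HS). fold e2.
    rewrite (gl (gInv Hf')), (gl (gInv Hf')), (gr (gInv Hf')). reflexivity.
Qed.

Lemma inv_info s y : is_inverse (cp_mul mulA mulS lam f) (rho mulS invS alpha s) y ->
  snd y = invS s /\ alpha (s * invS s) ** lam s (fst y) ** f s (invS s) = alpha (s * invS s).
Proof.
  destruct y as [b u]. intros [H1 H2]. unfold cp_mul, rho in H1, H2; simpl in H1, H2.
  injection H1 as H1a H1b. injection H2 as H2a H2b.
  assert (Hu : u = invS s). { apply (uniq HS); rewrite <- (assoc HS); auto. }
  subst u. split; [reflexivity|]. simpl.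
  set (e1 := s * invS s) in *.
  assert (He1 : idem mulS e1) by apply (idem_xxi HS).
  assert (Ee1s : e1 * s = s) by (unfold e1; rewrite (assoc HS); apply (Ix HS)).
  rewrite (ax1 _ He1), (sb2 _ He1), Ee1s in H1a. fold e1 in H1a.
  pose proof (aI He1) as Hi. unfold idem in Hi. rewrite Hi in H1a.
  rewrite (assoc SA), Hi in H1a.
  transitivity (alpha e1 ** lam s b ** f s (invS s) ** alpha e1); [|exact H1a]. rewrite !(assoc SA).
  rewrite <- (cen _ Hi). rewrite <- (cen_t (lam s b) (f s (invS s)) Hi).
  rewrite <- (assoc SA (alpha e1) (alpha e1)), Hi. reflexivity.
Qed.

Lemma part_lam s a : lam_rho mulA invA mulS invS alpha lam f s a = lam s a.
Proof.
  unfold lam_rho.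
  destruct (epsilon_spec (inhabits (rho mulS invS alpha s))
    (fun y => in_cp mulA invA mulS invS alpha y /\
       is_inverse (cp_mul mulA mulS lam f) (rho mulS invS alpha s) y) (inv_exists s)) as [_ Hy].
  fold (cp_inv mulA invA mulS invS alpha lam f (rho mulS invS alpha s)) in Hy.
  destruct (cp_inv mulA invA mulS invS alpha lam f (rho mulS invS alpha s)) as [b u] eqn:Ey.
  destruct (inv_info Hy) as [Hu K]. simpl in Hu, K. subst u.
  set (e1 := s * invS s) in *.
  set (F := f s (invS s)) in *.
  assert (He1 : idem mulS e1) by apply (idem_xxi HS).
  destruct (ainv_spec s (idem_xxi SA a)) as [He Hae].
  set (e := alpha_inv mulS alpha s (a ** invA a)) in *.
  set (g := s * e * invS s).
  assert (Hg : idem mulS g).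
  { assert (E : g = (s*e)*invS (s*e)).
    { unfold g. rewrite (inv_mul HS), (idem_inv HS He), !(assoc HS), (idt HS _ He). reflexivity. }
    rewrite E. apply (idem_xxi HS). }
  assert (Hag : idem mulA (alpha g)) by exact (aI Hg).
  set (L := lam s a).
  assert (LL : alpha g ** L = L).
  { unfold L. transitivity (lam s (alpha e ** a)).
    - rewrite lhom, (ax2 s He). reflexivity.
    - rewrite Hae, (assoc SA), (Ix SA). reflexivity. }
  assert (LinvL : L ** invA L = alpha g).
  { unfold L. rewrite <- lInv, <- lhom, <- Hae, (ax2 s He). reflexivity. }
  assert (P : cp_mul mulA mulS lam f (rho mulS invS alpha s) (cp_i mulA invA mulS alpha s a) = (L, s * e)).
  { unfold cp_mul, rho, cp_i; simpl. fold e e1 L. rewrite (sb1 s He). fold g.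
    rewrite (assoc SA), <- (cen L Hag), <- (assoc SA).
    rewrite <- (aM He1 Hg).
    assert (E : e1 * g = g) by (unfold e1, g; rewrite !(assoc HS), (Ixt HS); reflexivity).
    rewrite E, LL. reflexivity. }
  rewrite P.
  assert (F1 : alpha g ** lam (s * e) b = alpha g ** lam s b).
  { pose proof (ax3 s e b) as H. rewrite (ax1 _ He), lhom, (ax2 s He), (sb1 s He) in H. fold g in H.
    rewrite (idem_inv SA Hag) in H. rewrite H.
    rewrite (assoc SA), <- (cen _ Hag), <- (assoc SA), Hag. reflexivity. }
  assert (Eg1 : alpha g ** alpha e1 = alpha g).
  { rewrite <- (aM Hg He1). f_equal. unfold g, e1. rewrite !(assoc HS). rewrite (Iy HS). reflexivity. }
  assert (Ea : alpha g ** f s (e * invS s) = alpha g ** f (s * e) (invS s)).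
  { pose proof (ax5 s e (invS s)) as H.
    rewrite (sb2 _ He), (inv_inv HS), (sb1 s He) in H. fold g in H.
    assert (Hi : idem mulS (e * invS s * s)).
    { rewrite (assoc HS). apply (idem_mul HS He (idem_xix HS s)). }
    rewrite (ax2 s Hi) in H.
    assert (E : s * (e * invS s * s) * invS s = g).
    { unfold g. rewrite !(assoc HS), (Iy HS). reflexivity. }
    rewrite E in H. exact H. }
  assert (Eb : alpha g ** f s (e * invS s) = F ** alpha g).
  { pose proof (ax5 s (invS s) g) as H.
    rewrite (sb1 _ Hg), (inv_inv HS), (sb1 _ Hg) in H. fold F in H.
    assert (Ea1 : invS s * g * s = e * (invS s * s)).
    { unfold g. transitivity ((invS s * s) * e * (invS s * s)).
      rewrite !(assoc HS); reflexivity.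
      rewrite (idem_comm HS (idem_xix HS s) He), !(assoc HS), (Iyt HS).
      reflexivity. }
    rewrite Ea1 in H.
    rewrite (ax2 s (idem_mul HS He (idem_xix HS s))) in H.
    assert (E2 : s * (e * (invS s * s)) * invS s = g).
    { unfold g. rewrite !(assoc HS), (Iy HS). reflexivity. }
    assert (E3 : s * invS s * g * invS (s * invS s) = g).
    { rewrite (idem_inv HS (idem_xxi HS s)). unfold g. rewrite !(assoc HS), (Ixt HS), (Iy HS). reflexivity. }
    assert (E4 : invS s * g = e * invS s).
    { unfold g. transitivity ((invS s * s) * e * invS s). rewrite !(assoc HS); reflexivity.
      rewrite (idem_comm HS (idem_xix HS s) He), !(assoc HS), (Iy HS). reflexivity. }
    rewrite E2, E3, E4 in H. exact H. }
  assert (F2 : alpha g ** f (s * e) (invS s) = alpha g ** F).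
  { rewrite <- Ea, Eb. symmetry; apply (cen F Hag). }
  assert (FR : L ** lam (s * e) b ** f (s * e) (invS s) = L).
  { rewrite <- LL at 1. rewrite !(assoc SA). rewrite (cen_t _ _ Hag).
    rewrite <- (assoc SA (alpha g)), F1, (assoc SA). rewrite (cen_t _ _ Hag).
    rewrite F2. rewrite <- (cen_t _ _ Hag). rewrite <- (cen_t _ _ Hag).
    rewrite <- Eg1. rewrite (assoc SA). rewrite (cen_t _ _ (aI He1)).
    rewrite <- (assoc SA (alpha e1)), K. rewrite <- (cen _ (aI He1)), <- (assoc SA), Eg1, LL.
    reflexivity. }
  rewrite cpi_inv; unfold cp_mul; simpl; rewrite FR; [reflexivity|].
  unfold cp_i. fold g. rewrite LinvL, (ainv_a _ Hg). reflexivity.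
Qed.
End Main.
Unset Implicit Arguments.

Theorem corollary3p30 (A S : Type)
  (mulA : A -> A -> A) (invA : A -> A) (mulS : S -> S -> S) (invS : S -> S)
  (alpha : S -> A) (lam : S -> A -> A) (f : S -> S -> A) :
  semilattice_of_groups mulA invA ->
  inverse_semigroup mulS invS ->
  sieben_twisted_module mulA invA mulS invS alpha lam f ->
  (* rho is a transversal of j *)
  ((forall s, in_cp mulA invA mulS invS alpha (rho mulS invS alpha s)) /\
   (forall s, cp_j (rho mulS invS alpha s) = s) /\
   (forall e, idem mulS e ->
      idem (cp_mul mulA mulS lam f) (rho mulS invS alpha e))) /\
  (* the induced structure is Lambda itself *)
  (forall e, idem mulS e -> alpha_rho mulA invA mulS invS alpha e = alpha e) /\
  (forall s a, lam_rho mulA invA mulS invS alpha lam f s a = lam s a) /\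
  (forall s t, f_rho mulA invA mulS invS alpha lam f s t = f s t).
Proof.
  intros HA HS HT. split; [eapply part1; eauto|].
  split; [intros e He; eapply part_alpha; eauto|].
  split; intros; [eapply part_lam|eapply part_f]; eauto.
Qed.
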